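(* Let $d=2$. Assume $\beta\ne0$, $|\sigma^{(1)}|\ne|\sigma^{(2)}|$, and for $\alpha=1,2$: $\eta^{(\alpha)}\ne0$ and $\mathbf v^{(\alpha)}_+\not\equiv0$, $\mathbf v^{(\alpha)}_-\not\equiv0$. Then $$\widetilde f_{e,l}\le f^{(1)}\le\widetilde f_{e,u}.$$ Moreover $\widetilde f_{e,l}=f^{(1)}$ if and only if $\mathbf v^{(1)}_+$ or $\mathbf v^{(1)}_-$ is a nonzero constant on phase 1, and $\widetilde f_{e,u}=f^{(1)}$ if and only if $\mathbf v^{(2)}_+$ or $\mathbf v^{(2)}_-$ is a nonzero constant on phase 2. Finally $f_{e,l}\le\widetilde f_{e,l}$, with equality if and only if $B^{(1)}_{12}f_{e,l}=\mathbf e^{(1)}_1\cdot R_\perp\mathbf e^{(1)}_2$, and $\widetilde f_{e,u}\le f_{e,u}$, with equality if and only if $B^{(2)}_{12}(1-f_{e,u})=\mathbf e^{(2)}_1\cdot R_\perp\mathbf e^{(2)}_2$.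
   Context: Let $\Omega\subset\mathbb{R}^2$ be a bounded Lipschitz domain and let $\chi^{(1)}$ be the indicator function of a measurable subset of $\Omega$ (''phase 1''), $\chi^{(2)}=1-\chi^{(1)}$ (''phase 2''). Let $\sigma^{(\alpha)}=\sigma^{(\alpha)}_1+\mathrm{i}\sigma^{(\alpha)}_2$ ($\alpha=1,2$) be complex constants with $\sigma^{(\alpha)}_1>0$ and $\sigma^{(1)}\neq\sigma^{(2)}$, and $\sigma=\sigma^{(1)}\chi^{(1)}+\sigma^{(2)}\chi^{(2)}$. Let $V\in H^1(\Omega;\mathbb C)$ be a weak solution of $\nabla\cdot(\sigma\nabla V)=0$ in $\Omega$. Set $\mathbf E=-\nabla V=\mathbf E_1+\mathrm{i}\mathbf E_2$ with $\mathbf E_1,\mathbf E_2$ real. $\langle u\rangle=|\Omega|^{-1}\int_\Omega u$; $f^{(1)}=\langle\chi^{(1)}\rangle\in(0,1)$. For $\alpha,m=1,2$: $\mathbf E^{(\alpha)}_m=\chi^{(\alpha)}\mathbf E_m$, $\mathbf e^{(\alpha)}_m=\langle\mathbf E^{(\alpha)}_m\rangle$, $\eta^{(\alpha)}=\langle\|\mathbf E^{(\alpha)}_1\|^2\rangle+\langle\|\mathbf E^{(\alpha)}_2\|^2\rangle$. $\beta=\sigma^{(1)}_1\sigma^{(2)}_2-\sigma^{(1)}_2\sigma^{(2)}_1$. $f_{e,l}=(\|\mathbf e^{(1)}_1\|^2+\|\mathbf e^{(1)}_2\|^2)/\eta^{(1)}$, $f_{e,u}=1-(\|\mathbf e^{(2)}_1\|^2+\|\mathbf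 e^{(2)}_2\|^2)/\eta^{(2)}$. Let $R_\perp=\begin{bmatrix}0&1\\-1&0\end{bmatrix}$, $B^{(\alpha)}_{12}=\langle\mathbf E^{(\alpha)}_1\cdot R_\perp\mathbf E^{(\alpha)}_2\rangle$, and $\mathbf v^{(\alpha)}_\pm=\mathbf E^{(\alpha)}_1\pm R_\perp\mathbf E^{(\alpha)}_2$. Define $$\widetilde f_{e,l}=\max\Big\{\frac{\|\langle\mathbf v^{(1)}_-\rangle\|^2}{\langle\|\mathbf v^{(1)}_-\|^2\rangle},\frac{\|\langle\mathbf v^{(1)}_+\rangle\|^2}{\langle\|\mathbf v^{(1)}_+\|^2\rangle}\Big\},\qquad \widetilde f_{e,u}=\min\Big\{1-\frac{\|\langle\mathbf v^{(2)}_-\rangle\|^2}{\langle\|\mathbf v^{(2)}_-\|^2\rangle},1-\frac{\|\langle\mathbf v^{(2)}_+\rangle\|^2}{\langle\|\mathbf v^{(2)}_+\|^2\rangle}\Big\}.$$ *)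

(* Defs.v *)
From mathcomp Require Import all_boot all_order all_algebra all_classical all_reals all_analysis.
Import numFieldNormedType.Exports.
Import Order.TTheory GRing.Theory Num.Theory.
Set Implicit Arguments.
Unset Strict Implicit.
Unset Printing Implicit Defensive.
Local Open Scope ring_scope.
Local Open Scope classical_set_scope.

Notation mu2 R := ((@lebesgue_measure R) \x (@lebesgue_measure R))%E.

Section Defs.
Variable R : realType.
Implicit Types (Omega A : set (R * R)) (a b u v : R * R).

Definition dot2 u v : R := u.1 * v.1 + u.2 * v.2.
Definition nrm2 u : R := dot2 u u.
Definition Rperp u : R * R := (u.2, - u.1).
Definition addv u v : R * R := (u.1 + v.1, u.2 + v.2).
Definition subv u v : R * R := (u.1 - v.1, u.2 - v.2).
Definition sclv (c : R) u : R * R := (c * u.1, c * u.2).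

Definition avg Omega (f : R * R -> R) : R :=
  (fine ((mu2 R) Omega))^-1 * Rintegral (mu2 R) Omega f.
Definition avgv Omega (F : R * R -> R * R) : R * R :=
  (avg Omega (fun p => (F p).1), avg Omega (fun p => (F p).2)).

Definition pdx (f : R * R -> R) (p : R * R) : R := derive1 (fun t => f (t, p.2)) p.1.
Definition pdy (f : R * R -> R) (p : R * R) : R := derive1 (fun t => f (p.1, t)) p.2.
Definition pditer (s : seq bool) (f : R * R -> R) : R * R -> R :=
  foldr (fun (b : bool) g => if b then pdx g else pdy g) f s.
Definition smooth2 (f : R * R -> R) : Prop :=
  forall s : seq bool, continuous (pditer s f) /\
    forall p : R * R, derivable (fun t => pditer s f (t, p.2)) p.1 1 /\
                      derivable (fun t => pditer s f (p.1, t)) p.2 1.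
Definition test_fun Omega (phi : R * R -> R) : Prop :=
  smooth2 phi /\
  exists K : set (R * R), compact K /\ K `<=` Omega /\ (forall p, ~ K p -> phi p = 0).

Definition L2 Omega (f : R * R -> R) : Prop :=
  measurable_fun Omega f /\ (mu2 R).-integrable Omega (fun p => (f p ^+ 2)%:E).
Definition H1_weak_grad Omega (V : R * R -> R) (G : R * R -> R * R) : Prop :=
  L2 Omega V /\ L2 Omega (fun p => (G p).1) /\ L2 Omega (fun p => (G p).2) /\
  forall phi, test_fun Omega phi ->
    Rintegral (mu2 R) Omega (fun p => V p * pdx phi p)
      = - Rintegral (mu2 R) Omega (fun p => (G p).1 * phi p) /\
    Rintegral (mu2 R) Omega (fun p => V p * pdy phi p)
      = - Rintegral (mu2 R) Omega (fun p => (G p).2 * phi p).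

Definition rot2 (th : R) u : R * R :=
  (cos th * u.1 - sin th * u.2, sin th * u.1 + cos th * u.2).
Definition lipschitz_domain Omega : Prop :=
  open Omega /\ connected Omega /\ Omega !=set0 /\
  (exists M : R, forall p, Omega p -> `|p.1| <= M /\ `|p.2| <= M) /\
  (* near each boundary point, after a rigid motion Omega is the subgraph
     of a Lipschitz function *)
  (forall p, closure Omega p -> ~ Omega p ->
     exists (th r L : R) (g : R -> R),
       0 < r /\ (forall x y, `|g x - g y| <= L * `|x - y|) /\
       forall q, ball p r q ->
         (Omega q <-> (rot2 th (subv q p)).2 < g (rot2 th (subv q p)).1)).

(* phase indicators chi^(1) = 1_A, chi^(2) = 1 - chi^(1) *)
Definition chi (A : set (R * R)) (al : bool) (p : R * R) : R :=
  if al then \1_A p else 1 - \1_A p.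
(* sigma = sr + i si, sigma^(1) = s11 + i s12, sigma^(2) = s21 + i s22 *)
Definition sig_re A (s11 s21 : R) p : R := s11 * chi A true p + s21 * chi A false p.
Definition sig_im A (s12 s22 : R) p : R := s12 * chi A true p + s22 * chi A false p.

(* V = V1 + i V2 with weak gradients G1, G2 is a weak solution of
   div(sigma grad V) = 0, i.e. int (sigma grad V) . grad phi = 0 for all test phi
   (real and imaginary parts separately) *)
Definition weak_solution Omega A (s11 s12 s21 s22 : R) (G1 G2 : R * R -> R * R) : Prop :=
  forall phi, test_fun Omega phi ->
    Rintegral (mu2 R) Omega (fun p =>
      dot2 (subv (sclv (sig_re A s11 s21 p) (G1 p)) (sclv (sig_im A s12 s22 p) (G2 p)))
           (pdx phi p, pdy phi p)) = 0 /\
    Rintegral (mu2 R) Omega (fun p =>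
      dot2 (addv (sclv (sig_re A s11 s21 p) (G2 p)) (sclv (sig_im A s12 s22 p) (G1 p)))
           (pdx phi p, pdy phi p)) = 0.

(* ---- the field quantities; E1, E2 are the real/imag parts of E = - grad V ---- *)
Section Fields.
Variables (Omega A : set (R * R)) (E1 E2 : R * R -> R * R).
Definition Eph (al : bool) (m : bool) (p : R * R) : R * R :=
  sclv (chi A al p) (if m then E1 p else E2 p).
Definition eph al m : R * R := avgv Omega (Eph al m).
Definition eta al : R :=
  avg Omega (fun p => nrm2 (Eph al true p)) + avg Omega (fun p => nrm2 (Eph al false p)).
Definition beta (s11 s12 s21 s22 : R) : R := s11 * s22 - s12 * s21.
Definition f1 : R := avg Omega (chi A true).
Definition fel : R := (nrm2 (eph true true) + nrm2 (eph true false)) / eta true.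
Definition feu : R := 1 - (nrm2 (eph false true) + nrm2 (eph false false)) / eta false.
Definition B12 al : R := avg Omega (fun p => dot2 (Eph al true p) (Rperp (Eph al false p))).
Definition vpm al (pm : bool) (p : R * R) : R * R :=
  if pm then addv (Eph al true p) (Rperp (Eph al false p))
        else subv (Eph al true p) (Rperp (Eph al false p)).
Definition ratio al pm : R := nrm2 (avgv Omega (vpm al pm)) / avg Omega (fun p => nrm2 (vpm al pm p)).
Definition ftel : R := Num.max (ratio true false) (ratio true true).
Definition fteu : R := Num.min (1 - ratio false false) (1 - ratio false true).
End Fields.

End Defs.

(* Main.v *)
Require Import Defs.
From mathcomp Require Import all_boot all_order all_algebra all_classical all_reals all_analysis.
From mathcomp Require Import ring lra measurable_realfun.
Import numFieldNormedType.Exports.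
Import Order.TTheory GRing.Theory Num.Theory.
Local Open Scope ring_scope.
Local Open Scope classical_set_scope.

Set Implicit Arguments.
Unset Strict Implicit.

Definition box (R : realType) (q : (rat*rat)*(rat*rat)) : set (R*R) :=
  `]ratr q.1.1, ratr q.1.2[ `*` `]ratr q.2.1, ratr q.2.2[.

Lemma open_meas (R : realType) (O : set (R*R)) : open O -> measurable O.
Proof.
move=> oO.
have -> : O = \bigcup_q (if pselect (@box R q `<=` O) then @box R q else set0).
  apply/seteqP; split; last first.
    by move=> x [q _]; case: pselect => [qO /qO|].
  move=> x Ox.
  have := oO x Ox; case/nbhs_ballP => e /= e0 eO.
  have [q1 q1i] := @rat_in_itvoo R (x.1 - e) x.1 ltac:(by rewrite ltrBlDr ltrDl).
  have [q2 q2i] := @rat_in_itvoo R x.1 (x.1 + e) ltac:(by rewrite ltrDl).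
  have [q3 q3i] := @rat_in_itvoo R (x.2 - e) x.2 ltac:(by rewrite ltrBlDr ltrDl).
  have [q4 q4i] := @rat_in_itvoo R x.2 (x.2 + e) ltac:(by rewrite ltrDl).
  move: q1i q2i q3i q4i; rewrite !in_itv /= => /andP[a1 a2] /andP[b1 b2] /andP[c1 c2] /andP[d1 d2].
  exists ((q1, q2), (q3, q4)); first by [].
  case: pselect => [bs|nb]; last first.
    case: nb; move=> [y1 y2] [/=]; rewrite !in_itv/= => /andP[h1 h2] /andP[h3 h4].
    apply: eO; split => /=; rewrite /ball /=.
      rewrite ltr_norml; apply/andP; split; lra.
    rewrite ltr_norml; apply/andP; split; lra.
  by split; rewrite /= in_itv /= ?a2 ?b1 ?c2 ?d1.
refine (countable_bigcupT_measurable _ _); first exact: countableP.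
move=> q.
case: pselect => [hq|hq]; last exact: measurable0.
by apply: measurableX; exact: measurable_itv.
Qed.

Section Integ.
Variable R : realType.
Notation mu := (mu2 R).
Notation T := (measurableTypeR R * measurableTypeR R)%type.
Variable D : set T.
Hypothesis mD : measurable D.
Hypothesis finD : (mu D < +oo)%E.
Set Default Proof Using "mD finD".
Implicit Types f g w : T -> R.

Notation Int f := (mu.-integrable D (EFin \o f)).

Lemma int_cst k : Int (fun _ => k).
Proof.
apply/integrableP; split; first exact/measurable_EFinP/measurable_cst.
rewrite /comp (eq_integral (fun _ => `|k|%:E)); last by move=> x _.
have := integral_cst mu mD `|k|%:E; rewrite /cst => ->.
by rewrite lte_mul_pinfty.
Qed.

Lemma int_le f g : measurable_fun D f -> Int g ->
  (forall p, D p -> `|f p| <= g p) -> Int f.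
Proof.
move=> mf ig fg; apply: le_integrable ig => //; first exact/measurable_EFinP.
move=> p Dp /=; rewrite lee_fin (le_trans (fg p Dp))//.
exact: ler_norm.
Qed.

Lemma intD f g : Int f -> Int g -> Int (fun p => f p + g p).
Proof. by move=> hf hg; apply: (eq_integrable mD) (integrableD mD hf hg) => p _ /=. Qed.
Lemma intZ k f : Int f -> Int (fun p => k * f p).
Proof. by move=> hf; apply: (eq_integrable mD) (integrableZl mD k hf) => p _ /=. Qed.
Lemma intB f g : Int f -> Int g -> Int (fun p => f p - g p).
Proof. by move=> hf hg; apply: (eq_integrable mD) (integrableB mD hf hg) => p _ /=. Qed.

Lemma L2_meas f : L2 D f -> measurable_fun D f.
Proof. by case. Qed.

Lemma L2_sq f : L2 D f -> Int (fun p => f p ^+ 2).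
Proof. by case. Qed.

Lemma L2_int f : L2 D f -> Int f.
Proof.
move=> hf; apply: (@int_le _ (fun p => 1 + f p ^+ 2)); first exact: L2_meas.
  exact: (intD (int_cst 1) (L2_sq hf)).
move=> p _; have e : `|f p| ^+ 2 = f p ^+ 2 by rewrite real_normK ?num_real.
have := normr_ge0 (f p); nra.
Qed.


Lemma L2_ext f g : (forall p, f p = g p) -> L2 D g -> L2 D f.
Proof. by move=> fg; have -> : f = g by apply/funext. Qed.

Lemma L2_prod f g : L2 D f -> L2 D g -> Int (fun p => f p * g p).
Proof.
move=> hf hg; apply: (@int_le _ (fun p => f p ^+ 2 + g p ^+ 2)).
- exact: measurable_funM (L2_meas hf) (L2_meas hg).
- exact: intD (L2_sq hf) (L2_sq hg).
move=> p _; rewrite normrM.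
have e1 : `|f p| ^+ 2 = f p ^+ 2 by rewrite real_normK ?num_real.
have e2 : `|g p| ^+ 2 = g p ^+ 2 by rewrite real_normK ?num_real.
have := normr_ge0 (f p); have := normr_ge0 (g p); nra.
Qed.

Lemma L2D f g : L2 D f -> L2 D g -> L2 D (fun p => f p + g p).
Proof.
move=> hf hg; split; first exact: measurable_funD (L2_meas hf) (L2_meas hg).
apply: (@int_le _ (fun p => 2 * f p ^+ 2 + 2 * g p ^+ 2)).
- apply: measurable_funX; exact: measurable_funD (L2_meas hf) (L2_meas hg).
- exact: intD (intZ 2 (L2_sq hf)) (intZ 2 (L2_sq hg)).
move=> p _; rewrite ger0_norm ?sqr_ge0//.
have := sqr_ge0 (f p - g p); nra.
Qed.

Lemma L2Z k f : L2 D f -> L2 D (fun p => k * f p).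
Proof.
move=> hf; split.
  apply: measurable_funM; [exact: measurable_cst|exact: L2_meas hf].
apply: (eq_integrable mD) (intZ (k ^+ 2) (L2_sq hf)) => p _ /=.
by rewrite exprMn.
Qed.

Lemma L2w w f : measurable_fun D w -> (forall p, `|w p| <= 1) ->
  L2 D f -> L2 D (fun p => w p * f p).
Proof.
move=> mw w1 hf; split.
  exact: measurable_funM mw (L2_meas hf).
apply: (@int_le _ (fun p => f p ^+ 2)); last 1 first.
- move=> p _; rewrite ger0_norm ?sqr_ge0// exprMn.
  have : w p ^+ 2 <= 1.
    by rewrite -real_normK ?num_real// expr_le1.
  have := sqr_ge0 (f p); nra.
- apply: measurable_funX; exact: measurable_funM mw (L2_meas hf).
- exact: L2_sq.
Qed.

Lemma int0_ae g : measurable_fun D g -> Int g -> (forall p, D p -> 0 <= g p) ->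
  Rintegral mu D g = 0 -> {ae mu, forall p, D p -> g p = 0}.
Proof.
move=> mg ig g0 I0.
have I0' : (\int[mu]_(x in D) (g x)%:E = 0)%E.
  apply/eqP; rewrite -fine_eq0; first by move: I0; rewrite /Rintegral => ->.
  have := integrable_fin_num mD ig. by [].
have : (\int[mu]_(x in D) `|(EFin \o g) x| = 0)%E.
  rewrite -I0'; apply: eq_integral => p /[!inE] Dp /=.
  by rewrite ger0_norm ?g0.
move/(ae_eq_integral_abs mu mD (f := EFin \o g)).
move=> /(_ (proj2 (measurable_EFinP _ _) mg)).
apply: filterS => p h Dp; have := h Dp; rewrite /= /cst.
by case.
Qed.

Lemma ae_int0 g : measurable_fun D g -> {ae mu, forall p, D p -> g p = 0} ->
  Rintegral mu D g = 0.
Proof.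
move=> mg hae; rewrite /Rintegral.
rewrite (ae_eq_integral (cst 0)) //.
- by rewrite integral0.
- exact/measurable_EFinP.
- by apply: filterS hae => p h Dp; rewrite /= h.
Qed.


Lemma L2_one w : measurable_fun D w -> (forall p, `|w p| <= 1) -> L2 D w.
Proof.
move=> mw w1; split => //.
apply: (@int_le _ (fun _ => 1)); [exact: measurable_funX|exact: int_cst|].
move=> p _; rewrite ger0_norm ?sqr_ge0//.
by rewrite -real_normK ?num_real// expr_le1.
Qed.

Lemma idem_norm w : (forall p, w p * w p = w p) -> forall p, `|w p| <= 1.
Proof.
move=> ww p; have : w p * (w p - 1) = 0 by rewrite mulrBr mulr1 ww subrr.
move/eqP; rewrite mulf_eq0 subr_eq0 => /orP[/eqP->|/eqP->]; by rewrite ?normr0 ?normr1.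
Qed.

Lemma idem_cases w p : (forall p, w p * w p = w p) -> w p = 0 \/ w p = 1.
Proof.
move=> ww; have : w p * (w p - 1) = 0 by rewrite mulrBr mulr1 ww subrr.
by move/eqP; rewrite mulf_eq0 subr_eq0 => /orP[/eqP->|/eqP->]; [left|right].
Qed.

Lemma RintD f g : Int f -> Int g ->
  Rintegral mu D (fun p => f p + g p) = Rintegral mu D f + Rintegral mu D g.
Proof. by move=> hf hg; apply: RintegralD. Qed.
Lemma RintB f g : Int f -> Int g ->
  Rintegral mu D (fun p => f p - g p) = Rintegral mu D f - Rintegral mu D g.
Proof. by move=> hf hg; apply: RintegralB. Qed.
Lemma RintZ k f : Int f ->
  Rintegral mu D (fun p => k * f p) = k * Rintegral mu D f.
Proof. by move=> hf; apply: RintegralZl. Qed.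
Lemma Rint_ext f g : (forall p, D p -> f p = g p) ->
  Rintegral mu D f = Rintegral mu D g.
Proof. by move=> fg; apply: eq_Rintegral => p /[!inE] Dp; exact: fg. Qed.

Lemma cs w f : measurable_fun D w -> (forall p, w p * w p = w p) ->
  (forall p, f p = w p * f p) -> L2 D f -> 0 < Rintegral mu D w ->
  let I := Rintegral mu D f in
  let J := Rintegral mu D (fun p => f p ^+ 2) in
  let W := Rintegral mu D w in
  [/\ I ^+ 2 <= W * J,
     I ^+ 2 = W * J -> {ae mu, forall p, D p -> w p = 1 -> f p = I / W} &
     forall c, {ae mu, forall p, D p -> w p = 1 -> f p = c} -> I ^+ 2 = W * J].
Proof.
move=> mw ww fw hf W0 I J W.
have w1 := idem_norm ww.
have hw := L2_one mw w1.
have hfc c : L2 D (fun p => f p - c * w p).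
  apply: (@L2_ext _ (fun p => f p + (- c) * w p)); first by move=> p; ring.
  exact: L2D hf (L2Z _ hw).
have Qeq c : Rintegral mu D (fun p => (f p - c * w p) ^+ 2) = J - 2 * c * I + c ^+ 2 * W.
  rewrite (@Rint_ext _ (fun p => f p ^+ 2 + ((- (2 * c)) * f p + c ^+ 2 * w p))); last first.
    move=> p _; apply/eqP; rewrite -subr_eq0.
    have -> : (f p - c * w p) ^+ 2 - (f p ^+ 2 + (- (2 * c) * f p + c ^+ 2 * w p))
       = - 2 * c * (w p * f p - f p) + c ^+ 2 * (w p * w p - w p) by ring.
    by rewrite ww -fw !subrr !mulr0 addr0.
  rewrite RintD; [|exact: L2_sq|exact: intD (intZ _ (L2_int hf)) (intZ _ (L2_int hw))].
  rewrite RintD; [|exact: intZ (L2_int hf)|exact: intZ (L2_int hw)].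
  rewrite !RintZ; [|exact: L2_int|exact: L2_int].
  rewrite /I /J /W; ring.
have Qge c : 0 <= J - 2 * c * I + c ^+ 2 * W.
  by rewrite -Qeq; apply: Rintegral_ge0 => p _; exact: sqr_ge0.
have ha : I ^+ 2 <= W * J.
  have := Qge (I / W).
  have -> : J - 2 * (I / W) * I + (I / W) ^+ 2 * W = (W * J - I ^+ 2) / W.
    by field; rewrite gt_eqF.
  by rewrite pmulr_lge0 ?invr_gt0// subr_ge0.
split => //.
- move=> heq.
  have Q0 : Rintegral mu D (fun p => (f p - (I / W) * w p) ^+ 2) = 0.
    rewrite Qeq.
    have -> : J - 2 * (I / W) * I + (I / W) ^+ 2 * W = (W * J - I ^+ 2) / W.
      by field; rewrite gt_eqF.
    by rewrite heq subrr mul0r.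
  have := int0_ae (measurable_funX 2 (L2_meas (hfc (I / W)))) (L2_sq (hfc (I / W)))
    (fun p _ => sqr_ge0 _) Q0.
  apply: filterS => p h Dp wp1; have := h Dp.
  by rewrite wp1 mulr1 => /eqP; rewrite sqrf_eq0 subr_eq0 => /eqP.
- move=> c hae.
  have Q0 : Rintegral mu D (fun p => (f p - c * w p) ^+ 2) = 0.
    apply: ae_int0; first exact: (measurable_funX 2 (L2_meas (hfc c))).
    apply: filterS hae => p h Dp.
    case: (idem_cases p ww) => wp.
      by rewrite (fw p) wp !mul0r mulr0 subrr expr0n.
    by rewrite (h Dp wp) wp mulr1 subrr expr0n.
  move: Q0; rewrite Qeq => Q0.
  apply/eqP; rewrite eq_le ha /=.
  have h1 : 0 <= (I - c * W) ^+ 2 by exact: sqr_ge0.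
  have e : W * J = I ^+ 2 - (I - c * W) ^+ 2.
    have -> : W * J = W * (J - 2 * c * I + c ^+ 2 * W) + 2 * c * I * W - c ^+ 2 * W * W by ring.
    rewrite Q0; ring.
  by rewrite e lerBlDr lerDl.
Qed.


Lemma div_eqP (x a b : R) : x != 0 -> (a / x = b / x <-> a = b).
Proof. by move=> x0; split=> [h|->//]; rewrite -(divfK x0 a) h divfK. Qed.

Lemma phase w (F : T -> R * R) : measurable_fun D w -> (forall p, w p * w p = w p) ->
  (forall p, (F p).1 = w p * (F p).1) -> (forall p, (F p).2 = w p * (F p).2) ->
  L2 D (fun p => (F p).1) -> L2 D (fun p => (F p).2) ->
  0 < fine (mu D) -> 0 < Rintegral mu D w ->
  ~ {ae mu, forall p, D p -> F p = (0, 0)} ->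
  let r := nrm2 (avgv D F) / avg D (fun p => nrm2 (F p)) in
  [/\ 0 < avg D (fun p => nrm2 (F p)), r <= avg D w &
      (r = avg D w <-> exists c, c <> (0, 0) /\ {ae mu, forall p, D p -> w p = 1 -> F p = c})].
Proof.
move=> mw ww fw1 fw2 h1 h2 m0 W0 nz r.
have [a1 b1 c1] := cs mw ww fw1 h1 W0.
have [a2 b2 c2] := cs mw ww fw2 h2 W0.
set m := fine (mu D) in m0 *.
set I1 := Rintegral mu D (fun p => (F p).1) in a1 b1 c1 *.
set I2 := Rintegral mu D (fun p => (F p).2) in a2 b2 c2 *.
set J1 := Rintegral mu D (fun p => (F p).1 ^+ 2) in a1 b1 c1 *.
set J2 := Rintegral mu D (fun p => (F p).2 ^+ 2) in a2 b2 c2 *.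
set W := Rintegral mu D w in W0 a1 b1 c1 a2 b2 c2 *.
have J1ge : 0 <= J1 by apply: Rintegral_ge0 => p _; exact: sqr_ge0.
have J2ge : 0 <= J2 by apply: Rintegral_ge0 => p _; exact: sqr_ge0.
have hS : avg D (fun p => nrm2 (F p)) = m^-1 * (J1 + J2).
  rewrite /avg -/m; congr (_ * _).
  rewrite (@Rint_ext _ (fun p => (F p).1 ^+ 2 + (F p).2 ^+ 2)).
    by rewrite RintD //; exact: L2_sq.
  by move=> p _; rewrite /nrm2 /dot2 !expr2.
have hN : nrm2 (avgv D F) = (I1 ^+ 2 + I2 ^+ 2) / m ^+ 2.
  rewrite /nrm2 /dot2 /avgv /avg /= -/m -/I1 -/I2.
  by field; rewrite gt_eqF.
have hW : avg D w = W / m by rewrite /avg -/m -/W mulrC.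
have S0 : 0 < J1 + J2.
  rewrite lt_neqAle addr_ge0 // andbT; apply/eqP => S0; apply: nz.
  have eJ1 : J1 = 0 by lra.
  have eJ2 : J2 = 0 by lra.
  have z1 := int0_ae (measurable_funX 2 (L2_meas h1)) (L2_sq h1) (fun p _ => sqr_ge0 _) eJ1.
  have z2 := int0_ae (measurable_funX 2 (L2_meas h2)) (L2_sq h2) (fun p _ => sqr_ge0 _) eJ2.
  apply: filterS2 z1 z2 => p e1 e2 Dp.
  move: (e1 Dp) (e2 Dp) => /eqP; rewrite sqrf_eq0 => /eqP q1 /eqP; rewrite sqrf_eq0 => /eqP q2.
  by rewrite [F p]surjective_pairing q1 q2.
have mS0 : m * (J1 + J2) != 0 by rewrite mulf_neq0 // gt_eqF.
have hr : r = (I1 ^+ 2 + I2 ^+ 2) / (m * (J1 + J2)).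
  rewrite /r hS hN; field; rewrite !gt_eqF //.
have hW' : avg D w = (W * (J1 + J2)) / (m * (J1 + J2)).
  rewrite hW; field; rewrite !gt_eqF //.
split.
- by rewrite hS mulr_gt0 ?invr_gt0.
- rewrite hr hW' ler_pM2r ?invr_gt0 ?mulr_gt0 //; lra.
- rewrite hr hW' div_eqP //; split.
  + move=> heq.
    have e1 : I1 ^+ 2 = W * J1 by lra.
    have e2 : I2 ^+ 2 = W * J2 by lra.
    have z1 := b1 e1; have z2 := b2 e2.
    exists (I1 / W, I2 / W); split.
      case=> q1 q2; apply: nz.
      apply: filterS2 z1 z2 => p e1' e2' Dp.
      case: (idem_cases p ww) => wp.
        by rewrite [F p]surjective_pairing fw1 fw2 wp !mul0r.
      by rewrite [F p]surjective_pairing (e1' Dp wp) (e2' Dp wp) q1 q2.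
    apply: filterS2 z1 z2 => p e1' e2' Dp wp.
    by rewrite [F p]surjective_pairing (e1' Dp wp) (e2' Dp wp).
  + case=> c [_ hc].
    have e1 := c1 c.1 (filterS (fun p h Dp wp => congr1 fst (h Dp wp)) hc).
    have e2 := c2 c.2 (filterS (fun p h Dp wp => congr1 snd (h Dp wp)) hc).
    by rewrite e1 e2 mulrDr.
Qed.


Lemma int_ext f g : (forall p, f p = g p) -> Int g -> Int f.
Proof. by move=> fg; have -> : f = g by apply/funext. Qed.

Lemma avgD f g : Int f -> Int g -> avg D (fun p => f p + g p) = avg D f + avg D g.
Proof. by move=> hf hg; rewrite /avg RintD // mulrDr. Qed.
Lemma avgB f g : Int f -> Int g -> avg D (fun p => f p - g p) = avg D f - avg D g.
Proof. by move=> hf hg; rewrite /avg RintB // mulrBr. Qed.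
Lemma avgZ k f : Int f -> avg D (fun p => k * f p) = k * avg D f.
Proof. by move=> hf; rewrite /avg RintZ // mulrCA. Qed.
Lemma avg_ext f g : (forall p, D p -> f p = g p) -> avg D f = avg D g.
Proof. by move=> fg; rewrite /avg (Rint_ext fg). Qed.

Lemma lin_part (a b : T -> R * R) :
  L2 D (fun p => (a p).1) -> L2 D (fun p => (a p).2) ->
  L2 D (fun p => (b p).1) -> L2 D (fun p => (b p).2) ->
  [/\ avg D (fun p => nrm2 (Defs.addv (a p) (Rperp (b p)))) =
        (avg D (fun p => nrm2 (a p)) + avg D (fun p => nrm2 (b p)))
        + 2 * avg D (fun p => dot2 (a p) (Rperp (b p))),
      avg D (fun p => nrm2 (Defs.subv (a p) (Rperp (b p)))) =
        (avg D (fun p => nrm2 (a p)) + avg D (fun p => nrm2 (b p)))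
        - 2 * avg D (fun p => dot2 (a p) (Rperp (b p))),
      nrm2 (avgv D (fun p => Defs.addv (a p) (Rperp (b p)))) =
        (nrm2 (avgv D a) + nrm2 (avgv D b)) + 2 * dot2 (avgv D a) (Rperp (avgv D b)) &
      nrm2 (avgv D (fun p => Defs.subv (a p) (Rperp (b p)))) =
        (nrm2 (avgv D a) + nrm2 (avgv D b)) - 2 * dot2 (avgv D a) (Rperp (avgv D b))].
Proof.
move=> ha1 ha2 hb1 hb2.
have ina : Int (fun p => nrm2 (a p)).
  apply: (@int_ext _ (fun p => (a p).1 ^+ 2 + (a p).2 ^+ 2)).
    by move=> p; rewrite /nrm2 /dot2 !expr2.
  exact: intD (L2_sq ha1) (L2_sq ha2).
have inb : Int (fun p => nrm2 (b p)).
  apply: (@int_ext _ (fun p => (b p).1 ^+ 2 + (b p).2 ^+ 2)).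
    by move=> p; rewrite /nrm2 /dot2 !expr2.
  exact: intD (L2_sq hb1) (L2_sq hb2).
have ind : Int (fun p => dot2 (a p) (Rperp (b p))).
  apply: (@int_ext _ (fun p => (a p).1 * (b p).2 - (a p).2 * (b p).1)).
    by move=> p; rewrite /dot2 /Rperp /=; ring.
  exact: intB (L2_prod ha1 hb2) (L2_prod ha2 hb1).
have inab : Int (fun p => nrm2 (a p) + nrm2 (b p)) by exact: intD.
split.
- rewrite -avgD // -avgZ // -avgD //; last exact: intZ.
  by apply: avg_ext => p _; rewrite /nrm2 /dot2 /Defs.addv /Rperp /=; ring.
- rewrite -avgD // -avgZ // -avgB //; last exact: intZ.
  by apply: avg_ext => p _; rewrite /nrm2 /dot2 /Defs.subv /Rperp /=; ring.
- have iN : Int (fun p => - (b p).1).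
    by apply: (@int_ext _ (fun p => (-1) * (b p).1)); [move=> p; ring|exact: intZ (L2_int hb1)].
  rewrite /avgv /Defs.addv /Rperp /= (avgD (L2_int ha1) (L2_int hb2)) (avgD (L2_int ha2) iN).
  rewrite (@avg_ext (fun p => - (b p).1) (fun p => (-1) * (b p).1)); last by move=> p _; ring.
  rewrite (avgZ _ (L2_int hb1)).
  by rewrite /nrm2 /dot2 /=; ring.
- have iN : Int (fun p => - (b p).1).
    by apply: (@int_ext _ (fun p => (-1) * (b p).1)); [move=> p; ring|exact: intZ (L2_int hb1)].
  rewrite /avgv /Defs.subv /Rperp /= (avgB (L2_int ha1) (L2_int hb2)) (avgB (L2_int ha2) iN).
  rewrite (@avg_ext (fun p => - (b p).1) (fun p => (-1) * (b p).1)); last by move=> p _; ring.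
  rewrite (avgZ _ (L2_int hb1)).
  by rewrite /nrm2 /dot2 /=; ring.
Qed.

End Integ.
Unset Default Proof Using.

Lemma mediant (R : realType) (N c eta B : R) : 0 < eta + 2 * B -> 0 < eta - 2 * B ->
  N / eta <= Num.max ((N - 2 * c) / (eta - 2 * B)) ((N + 2 * c) / (eta + 2 * B)) /\
  (N / eta = Num.max ((N - 2 * c) / (eta - 2 * B)) ((N + 2 * c) / (eta + 2 * B))
     <-> B * (N / eta) = c).
Proof.
move=> yp xp.
have ep : 0 < eta by lra.
set x := eta - 2 * B in xp *; set y := eta + 2 * B in yp *.
set rm := (N - 2 * c) / x; set rp := (N + 2 * c) / y; set q := N / eta.
have hq : q * eta = N by rewrite /q divfK // gt_eqF.
have hm : rm * x = N - 2 * c by rewrite /rm divfK // gt_eqF.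
have hp : rp * y = N + 2 * c by rewrite /rp divfK // gt_eqF.
have hxy : x + y = 2 * eta by rewrite /x /y; ring.
have avgq : q * (x + y) = rm * x + rp * y by rewrite hm hp hxy; lra.
have key : B * q = c <-> (rm = q /\ rp = q).
  split.
    move=> bq; split.
      have h : rm * x = q * x by rewrite hm /x mulrBr hq -bq; ring.
      by rewrite -[rm](mulfK (lt0r_neq0 xp)) h mulfK // gt_eqF.
    have h : rp * y = q * y by rewrite hp /y mulrDr hq -bq; ring.
    by rewrite -[rp](mulfK (lt0r_neq0 yp)) h mulfK // gt_eqF.
  case=> e1 e2; move: hm; rewrite e1 /x => hm'; lra.
rewrite key.
have [hle|hlt] := leP rm rp.
- have h1 : (rp - q) * (x + y) = (rp - rm) * x.
    by rewrite mulrBl avgq; ring.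
  have h2 : 0 <= (rp - rm) * x by apply: mulr_ge0; [rewrite subr_ge0|exact: ltW].
  split.
    have : 0 <= rp - q by rewrite -(pmulr_lge0 _ (addr_gt0 xp yp)) h1.
    by rewrite subr_ge0.
  split; last by case=> _ ->.
  move=> eq; split => //.
  have h3 : rm * x = rp * x by move: h1; rewrite -eq subrr mul0r => /esym/eqP; rewrite mulf_eq0 (gt_eqF xp) orbF subr_eq0 => /eqP ->.
  by rewrite -[rm](mulfK (lt0r_neq0 xp)) h3 mulfK ?(lt0r_neq0 xp).
- have h1 : (rm - q) * (x + y) = (rm - rp) * y.
    by rewrite mulrBl avgq; ring.
  have h2 : 0 <= (rm - rp) * y by apply: mulr_ge0; [rewrite subr_ge0 ltW|exact: ltW].
  split.
    have : 0 <= rm - q by rewrite -(pmulr_lge0 _ (addr_gt0 xp yp)) h1.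
    by rewrite subr_ge0.
  split; last by case=> ->.
  move=> eq; split => //.
  have h3 : rp * y = rm * y by move: h1; rewrite -eq subrr mul0r => /esym/eqP; rewrite mulf_eq0 (gt_eqF yp) orbF subr_eq0 => /eqP ->.
  by rewrite -[rp](mulfK (lt0r_neq0 yp)) h3 mulfK ?(lt0r_neq0 yp).
Qed.


Section Chi.
Variable R : realType.
Notation T := (measurableTypeR R * measurableTypeR R)%type.
Variables (D A : set T).
Hypothesis mA : measurable A.
Variables (E1 E2 : T -> R * R).

Lemma chi_idem al p : chi A al p * chi A al p = chi A al p.
Proof.
rewrite /chi indicE; case: al; case: (p \in A); rewrite /= ?mul1r ?mul0r //.
  by rewrite subrr mul0r.
by rewrite subr0 mul1r.
Qed.

Lemma chi_meas al : measurable_fun D (chi A al).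
Proof.
case: al; rewrite /chi; first exact: measurable_indic.
by apply: measurable_funB; [exact: measurable_cst|exact: measurable_indic].
Qed.

Lemma vpm_w al pm p :
  (vpm A E1 E2 al pm p).1 = chi A al p * (vpm A E1 E2 al pm p).1 /\
  (vpm A E1 E2 al pm p).2 = chi A al p * (vpm A E1 E2 al pm p).2.
Proof.
have cc := chi_idem al p.
rewrite /vpm /Eph /Defs.addv /Defs.subv /Rperp /sclv.
by case: pm => /=; split; rewrite ?mulrDr ?mulrBr ?mulrN !mulrA cc.
Qed.

Hypothesis mD : measurable D.
Hypothesis finD : (mu2 R D < +oo)%E.

Lemma Eph_L2 al :
  L2 D (fun p => (E1 p).1) -> L2 D (fun p => (E1 p).2) ->
  L2 D (fun p => (E2 p).1) -> L2 D (fun p => (E2 p).2) ->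
  forall m, L2 D (fun p => (Eph A E1 E2 al m p).1) /\ L2 D (fun p => (Eph A E1 E2 al m p).2).
Proof.
move=> h11 h12 h21 h22 m.
have w1 := idem_norm mD finD (fun p => chi_idem al p).
case: m; split.
- exact: (L2w mD finD (chi_meas al) w1 h11).
- exact: (L2w mD finD (chi_meas al) w1 h12).
- exact: (L2w mD finD (chi_meas al) w1 h21).
- exact: (L2w mD finD (chi_meas al) w1 h22).
Qed.

Lemma vpm_L2 al :
  (forall m, L2 D (fun p => (Eph A E1 E2 al m p).1) /\ L2 D (fun p => (Eph A E1 E2 al m p).2)) ->
  forall pm, L2 D (fun p => (vpm A E1 E2 al pm p).1) /\ L2 D (fun p => (vpm A E1 E2 al pm p).2).
Proof.
move=> h pm.
have [ht1 ht2] := h true; have [hf1 hf2] := h false.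
have N1 := L2Z mD finD (-1) hf1.
have N2 := L2Z mD finD (-1) hf2.
case: pm; split.
- exact: (L2D mD finD ht1 hf2).
- apply: (L2_ext mD finD _ (L2D mD finD ht2 N1)) => p; rewrite /vpm /Defs.addv /Rperp /=; ring.
- apply: (L2_ext mD finD _ (L2D mD finD ht1 N2)) => p; rewrite /vpm /Defs.subv /Rperp /=; ring.
- apply: (L2_ext mD finD _ (L2D mD finD ht2 hf1)) => p; rewrite /vpm /Defs.subv /Rperp /=; ring.
Qed.

End Chi.

Lemma max_eq (R : realType) (a b z : R) : a <= z -> b <= z ->
  (Num.max a b = z <-> a = z \/ b = z).
Proof.
move=> az bz; case: (leP a b) => h; split.
- by right.
- case=> // e; apply/eqP; rewrite eq_le bz /= -e; exact: h.
- by left.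
- case=> // e; exfalso; move: h; rewrite e => h.
  by move: (lt_le_trans h az); rewrite ltxx.
Qed.

Lemma min1 (R : realType) (a b : R) : Num.min (1 - a) (1 - b) = 1 - Num.max a b.
Proof.
case: (leP a b) => h.
  by have -> : Num.min (1 - a) (1 - b) = 1 - b by apply/min_idPr; lra.
by have -> : Num.min (1 - a) (1 - b) = 1 - a by apply/min_idPl; lra.
Qed.

Lemma aeS (R : realType) (P Q : (measurableTypeR R * measurableTypeR R)%type -> Prop) :
  (forall p, P p -> Q p) -> {ae mu2 R, forall p, P p} -> {ae mu2 R, forall p, Q p}.
Proof. by move=> PQ; apply: filterS. Qed.

Lemma ind1 (R : realType) (A : set (R * R)) p : \1_A p = 1 :> R -> A p.
Proof.
rewrite indicE; case: (boolP (p \in A)) => [/set_mem //|_] /= /eqP.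
by rewrite eq_sym oner_eq0.
Qed.

Lemma ind0 (R : realType) (A : set (R * R)) p : 1 - \1_A p = 1 :> R -> ~ A p.
Proof.
rewrite indicE; case: (boolP (p \in A)) => [_|/negP h _ /mem_set //] /= /eqP.
by rewrite subrr eq_sym oner_eq0.
Qed.

Unset Implicit Arguments.
Unset Strict Implicit.

Theorem mainTheorem7 (R : realType) (Omega A : set (R * R))
  (s11 s12 s21 s22 : R) (V1 V2 : R * R -> R) (G1 G2 : R * R -> R * R) :
  lipschitz_domain Omega ->
  measurable A -> A `<=` Omega ->
  0 < s11 -> 0 < s21 -> (s11, s12) <> (s21, s22) ->
  H1_weak_grad Omega V1 G1 -> H1_weak_grad Omega V2 G2 ->
  weak_solution Omega A s11 s12 s21 s22 G1 G2 ->
  let E1 := fun p => sclv (-1) (G1 p) in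
  let E2 := fun p => sclv (-1) (G2 p) in
  0 < f1 Omega A < 1 ->
  beta s11 s12 s21 s22 != 0 ->
  s11 ^+ 2 + s12 ^+ 2 != s21 ^+ 2 + s22 ^+ 2 ->
  (forall al, eta Omega A E1 E2 al != 0) ->
  (forall al pm, ~ {ae (mu2 R), forall p, Omega p -> vpm A E1 E2 al pm p = (0, 0)}) ->
  [/\ ftel Omega A E1 E2 <= f1 Omega A <= fteu Omega A E1 E2,
      ftel Omega A E1 E2 = f1 Omega A <->
        exists pm (c : R * R), c <> (0, 0) /\
          {ae (mu2 R), forall p, A p -> vpm A E1 E2 true pm p = c},
      fteu Omega A E1 E2 = f1 Omega A <->
        exists pm (c : R * R), c <> (0, 0) /\
          {ae (mu2 R), forall p, (Omega `\` A) p -> vpm A E1 E2 false pm p = c},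
      fel Omega A E1 E2 <= ftel Omega A E1 E2 /\
        (fel Omega A E1 E2 = ftel Omega A E1 E2 <->
         B12 Omega A E1 E2 true * fel Omega A E1 E2
           = dot2 (eph Omega A E1 E2 true true) (Rperp (eph Omega A E1 E2 true false)))
    & fteu Omega A E1 E2 <= feu Omega A E1 E2 /\
        (fteu Omega A E1 E2 = feu Omega A E1 E2 <->
         B12 Omega A E1 E2 false * (1 - feu Omega A E1 E2)
           = dot2 (eph Omega A E1 E2 false true) (Rperp (eph Omega A E1 E2 false false)))].
Proof.
move=> lipO mA AO s1p s2p sne HV1 HV2 Hws E1 E2 /andP[f1p f1l] hb hs heta hnz.
have mO : measurable Omega by apply: open_meas; case: lipO.
have mge : 0 <= fine (mu2 R Omega) by apply: fine_ge0; exact: measure_ge0.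
have m0 : 0 < fine (mu2 R Omega).
  rewrite lt_neqAle mge andbT; apply/eqP => m0.
  by move: f1p; rewrite /f1 /avg -m0 invr0 mul0r ltxx.
have finO : (mu2 R Omega < +oo)%E.
  move: m0; case: (mu2 R Omega) => [r _|h|h]; [exact: ltry|by move: h; rewrite /= ?ltxx|by move: h; rewrite /= ?ltxx].
set m := fine (mu2 R Omega) in mge m0.
have [_ [g11 [g12 _]]] := HV1.
have [_ [g21 [g22 _]]] := HV2.
have hE11 : L2 Omega (fun p => (E1 p).1) by exact: (L2Z mO finO (-1) g11).
have hE12 : L2 Omega (fun p => (E1 p).2) by exact: (L2Z mO finO (-1) g12).
have hE21 : L2 Omega (fun p => (E2 p).1) by exact: (L2Z mO finO (-1) g21).
have hE22 : L2 Omega (fun p => (E2 p).2) by exact: (L2Z mO finO (-1) g22).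
have hEph al := Eph_L2 (E1:=E1) (E2:=E2) mA mO finO al hE11 hE12 hE21 hE22.
have hvpm al := vpm_L2 mO finO (hEph al).
have W1def : avg Omega (chi A true) = f1 Omega A by [].
have iW1 : (mu2 R).-integrable Omega (EFin \o chi A true).
  exact: (L2_int mO finO (L2_one mO finO (chi_meas (D:=Omega) mA true)
    (idem_norm mO finO (fun p => chi_idem A true p)))).
have W2def : avg Omega (chi A false) = 1 - f1 Omega A.
  rewrite /avg /f1 /avg -/m /chi.
  rewrite (RintB mO finO (int_cst mO finO 1) iW1) Rintegral_cst // -/m.
  by rewrite mulrBr mul1r mulVf // gt_eqF.
have Wpos al : 0 < Rintegral (mu2 R) Omega (chi A al).
  have : 0 < avg Omega (chi A al).
    by case: al; [rewrite W1def | rewrite W2def subr_gt0].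
  by rewrite /avg -/m pmulr_rgt0 // invr_gt0.
have Ph al pm := phase mO finO (chi_meas (D:=Omega) mA al) (fun p => chi_idem A al p)
   (fun p => (vpm_w A E1 E2 al pm p).1) (fun p => (vpm_w A E1 E2 al pm p).2)
   (hvpm al pm).1 (hvpm al pm).2 m0 (Wpos al) (hnz al pm).
have Pd al pm : 0 < avg Omega (fun p => nrm2 (vpm A E1 E2 al pm p)).
  by case: (Ph al pm).
have Pr al pm : Defs.ratio Omega A E1 E2 al pm <= avg Omega (chi A al).
  by case: (Ph al pm) => _ h _; exact: h.
have Pq al pm : Defs.ratio Omega A E1 E2 al pm = avg Omega (chi A al) <->
    exists c : R * R, c <> (0, 0) /\
      {ae mu2 R, forall p, Omega p -> chi A al p = 1 -> vpm A E1 E2 al pm p = c}.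
  by case: (Ph al pm) => _ _ h; exact: h.
have AE1 pm c : {ae mu2 R, forall p, A p -> vpm A E1 E2 true pm p = c} <->
    {ae mu2 R, forall p, Omega p -> chi A true p = 1 -> vpm A E1 E2 true pm p = c}.
  split; apply: aeS => p h.
    by move=> Op /ind1 Ap; exact: h.
  by move=> Ap; apply: h; [exact: AO|rewrite /chi indicE mem_set].
have AE2 pm c : {ae mu2 R, forall p, (Omega `\` A) p -> vpm A E1 E2 false pm p = c} <->
    {ae mu2 R, forall p, Omega p -> chi A false p = 1 -> vpm A E1 E2 false pm p = c}.
  split; apply: aeS => p h.
    by move=> Op /ind0 nAp; exact: h.
  by case=> Op nAp; apply: h => //; rewrite /chi indicE memNset // subr0.
have [l1 l2 l3 l4] := lin_part mO finO (hEph true true).1 (hEph true true).2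
   (hEph true false).1 (hEph true false).2.
have [k1 k2 k3 k4] := lin_part mO finO (hEph false true).1 (hEph false true).2
   (hEph false false).1 (hEph false false).2.
split.
- apply/andP; split.
    by rewrite /ftel ge_max; apply/andP; split; exact: Pr.
  rewrite /fteu le_min; apply/andP; split.
    by have := Pr false false; rewrite W2def; lra.
  by have := Pr false true; rewrite W2def; lra.
- rewrite -W1def /ftel.
  apply: (iff_trans (max_eq (Pr true false) (Pr true true))).
  split.
    case=> e.
      have [c [cn hc]] := (Pq true false).1 e.
      by exists false, c; split => //; apply/AE1.
    have [c [cn hc]] := (Pq true true).1 e.
    by exists true, c; split => //; apply/AE1.
  case=> pm [c [cn hc]].
  have e := (Pq true pm).2 (ex_intro _ c (conj cn ((AE1 pm c).1 hc))).
  by case: pm hc e => hc e; [right|left].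
- have eq2 : forall M, (1 - M = f1 Omega A) <-> (M = avg Omega (chi A false)).
    by move=> M; rewrite W2def; split => h; lra.
  rewrite /fteu min1.
  apply: (iff_trans (eq2 _)).
  apply: (iff_trans (max_eq (Pr false false) (Pr false true))).
  split.
    case=> e.
      have [c [cn hc]] := (Pq false false).1 e.
      by exists false, c; split => //; apply/AE2.
    have [c [cn hc]] := (Pq false true).1 e.
    by exists true, c; split => //; apply/AE2.
  case=> pm [c [cn hc]].
  have e := (Pq false pm).2 (ex_intro _ c (conj cn ((AE2 pm c).1 hc))).
  by case: pm hc e => hc e; [right|left].
- have rT : Defs.ratio Omega A E1 E2 true true =
      ((nrm2 (eph Omega A E1 E2 true true) + nrm2 (eph Omega A E1 E2 true false))
        + 2 * dot2 (eph Omega A E1 E2 true true) (Rperp (eph Omega A E1 E2 true false))) /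
      (eta Omega A E1 E2 true + 2 * B12 Omega A E1 E2 true).
    by rewrite /Defs.ratio l3 l1.
  have rF : Defs.ratio Omega A E1 E2 true false =
      ((nrm2 (eph Omega A E1 E2 true true) + nrm2 (eph Omega A E1 E2 true false))
        - 2 * dot2 (eph Omega A E1 E2 true true) (Rperp (eph Omega A E1 E2 true false))) /
      (eta Omega A E1 E2 true - 2 * B12 Omega A E1 E2 true).
    by rewrite /Defs.ratio l4 l2.
  have dT : 0 < eta Omega A E1 E2 true + 2 * B12 Omega A E1 E2 true.
    by have := Pd true true; rewrite l1.
  have dF : 0 < eta Omega A E1 E2 true - 2 * B12 Omega A E1 E2 true.
    by have := Pd true false; rewrite l2.
  rewrite /ftel rT rF /fel.
  exact: mediant.
- have rT : Defs.ratio Omega A E1 E2 false true =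
      ((nrm2 (eph Omega A E1 E2 false true) + nrm2 (eph Omega A E1 E2 false false))
        + 2 * dot2 (eph Omega A E1 E2 false true) (Rperp (eph Omega A E1 E2 false false))) /
      (eta Omega A E1 E2 false + 2 * B12 Omega A E1 E2 false).
    by rewrite /Defs.ratio k3 k1.
  have rF : Defs.ratio Omega A E1 E2 false false =
      ((nrm2 (eph Omega A E1 E2 false true) + nrm2 (eph Omega A E1 E2 false false))
        - 2 * dot2 (eph Omega A E1 E2 false true) (Rperp (eph Omega A E1 E2 false false))) /
      (eta Omega A E1 E2 false - 2 * B12 Omega A E1 E2 false).
    by rewrite /Defs.ratio k4 k2.
  have dT : 0 < eta Omega A E1 E2 false + 2 * B12 Omega A E1 E2 false.
    by have := Pd false true; rewrite k1.
  have dF : 0 < eta Omega A E1 E2 false - 2 * B12 Omega A E1 E2 false.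
    by have := Pd false false; rewrite k2.
  rewrite /fteu min1 rT rF /feu.
  have [hle hiff] := mediant
    (nrm2 (eph Omega A E1 E2 false true) + nrm2 (eph Omega A E1 E2 false false))
    (dot2 (eph Omega A E1 E2 false true) (Rperp (eph Omega A E1 E2 false false))) dT dF.
  set M := Num.max _ _ in hle hiff *.
  set q := _ / eta Omega A E1 E2 false in hle hiff *.
  have -> : 1 - (1 - q) = q by ring.
  split; first lra.
  split => h.
    by apply/hiff; lra.
  by have := (proj2 hiff) h; lra.
Qed.
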